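(* Consider the packet spreading algorithm described in the context with any $N\ge 2$. For every iteration $k\in\{0,1,\dots,K-1\}$, letting $i=m_k$ be the source selected in iteration $k$, we have for every source $j\neq i$ $$\tilde Q_j^{k+1}=\frac{x_j^k+1}{K_j}-\frac{x_i^k}{K_i}.$$
   Context: Packet spreading algorithm: Let $N\ge 2$, let $K_1,\dots,K_N$ be positive integers and $K=\sum_{n=1}^N K_n$. The algorithm runs iterations $k=0,1,\dots,K-1$ and maintains deficit counters $B_n^k$, $1\le n\le N$, with $B_n^0=0$ for all $n$. In iteration $k$, define the quantums $Q_n^k=\frac{(1-B_n^k)K}{K_n}$; select a source $m_k\in\arg\min_{1\le n\le N} Q_n^k$ (ties broken arbitrarily); let $Q=Q_{m_k}^k$; set $B_n^{k+1}=B_n^k+Q\frac{K_n}{K}$ for $n\neq m_k$ and $B_{m_k}^{k+1}=0$; and set the $k$-th entry of the output pattern to $P(k)=m_k$. Normalized quantums: $\tilde Q_n^k=Q_n^k/K=(1-B_n^k)/K_n$. For $0\le k\le K-1$, $x_n^k$ denotes the number of indices $k'\in\{0,\dots,k\}$ with $m_{k'}=n$, i.e. the number of source-$n$ instances inserted into the pattern after iteration $k$. *)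

(* Defs.v *)
From HB Require Import structures.
From mathcomp Require Import all_boot all_order all_algebra.
Set Implicit Arguments. Unset Strict Implicit. Unset Printing Implicit Defensive.
Import Order.TTheory GRing.Theory Num.Theory.
Local Open Scope ring_scope.

Section PacketSpreading.
Variables (R : realFieldType) (N : nat) (Kn : 'I_N -> nat).

Definition Ktot : nat := (\sum_(n < N) Kn n)%N.

Definition quantum (b : R) (n : 'I_N) : R := (1 - b) * (Ktot%:R) / (Kn n)%:R.

(* Deficit counters B^k along a run with selected sources m : nat -> 'I_N
   (m k is the source selected in iteration k). *)
Fixpoint deficit (m : nat -> 'I_N) (k : nat) : 'I_N -> R :=
  match k with
  | 0 => fun _ => 0
  | k'.+1 => fun n =>
      let Bk := deficit m k' in
      let Q := quantum (Bk (m k')) (m k') in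
      if n == m k' then 0 else Bk n + Q * (Kn n)%:R / (Ktot%:R)
  end.

Definition Qk (m : nat -> 'I_N) (k : nat) (n : 'I_N) : R :=
  quantum (deficit m k n) n.

Definition Qtilde (m : nat -> 'I_N) (k : nat) (n : 'I_N) : R :=
  Qk m k n / (Ktot%:R).

Definition xcount (m : nat -> 'I_N) (k : nat) (n : 'I_N) : nat :=
  count (fun k' => m k' == n) (iota 0 k.+1).

Definition valid_run (m : nat -> 'I_N) : Prop :=
  forall k, (k < Ktot)%N -> forall n : 'I_N, Qk m k (m k) <= Qk m k n.

End PacketSpreading.

(* Main.v *)
Require Import Defs.
From HB Require Import structures.
From mathcomp Require Import all_boot all_order all_algebra.
From mathcomp Require Import ring lra.
Import Order.TTheory GRing.Theory Num.Theory.
Local Open Scope ring_scope.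
Set Implicit Arguments.

Definition pc (N : nat) (m : nat -> 'I_N) (k : nat) (n : 'I_N) : nat :=
  count (fun k' => m k' == n) (iota 0 k).

Lemma pcS N (m : nat -> 'I_N) k n : pc m k.+1 n = (pc m k n + (m k == n))%N.
Proof. by rewrite /pc -addn1 iotaD count_cat /= add0n addn0. Qed.

Definition cc (R : realFieldType) N (Kn : 'I_N -> nat) (m : nat -> 'I_N) (k : nat) : R :=
  match k with 0 => 0 | k'.+1 => (pc m k (m k'))%:R / (Kn (m k'))%:R end.

Lemma inv_lem (R : realFieldType) N (Kn : 'I_N -> nat) (HKpos : forall n, (0 < Kn n)%N)
   (HK : (Ktot Kn)%:R != 0 :> R) (m : nat -> 'I_N) k n :
  (1 - deficit R Kn m k n) / (Kn n)%:R = ((pc m k n)%:R + 1) / (Kn n)%:R - cc R Kn m k.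
Proof.
have Hn : forall n, (Kn n)%:R != 0 :> R by move=> n'; rewrite pnatr_eq0 -lt0n.
elim: k n => [|k IH] n.
  by rewrite /= /pc /= subr0 add0r subr0.
rewrite /= /quantum.
have IHi := IH (m k).
have Pi : (pc m k.+1 (m k))%:R = (pc m k (m k))%:R + 1 :> R by rewrite pcS eqxx addn1 -natr1.
case: eqP => [->|/eqP ne].
  rewrite Pi; move: (Hn (m k)) => H1.
  by field.
have Pn : pc m k.+1 n = pc m k n by rewrite pcS eq_sym (negbTE ne) addn0.
rewrite Pn Pi.
have IHn := IH n.
move: (Hn n) (Hn (m k)) => H1 H2.
have e1 : deficit R Kn m k n = 1 - (((pc m k n)%:R + 1) / (Kn n)%:R - cc R Kn m k) * (Kn n)%:R.
  by rewrite -IHn; field.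
have e2 : deficit R Kn m k (m k) = 1 - (((pc m k (m k))%:R + 1) / (Kn (m k))%:R - cc R Kn m k) * (Kn (m k))%:R.
  by rewrite -IHi; field.
rewrite e1 e2; field; apply/and3P; split => //.
Qed.

Theorem mainTheorem4 (R : realFieldType) (N : nat) (HN : (2 <= N)%N)
    (Kn : 'I_N -> nat) (HKpos : forall n, (0 < Kn n)%N)
    (m : nat -> 'I_N) (Hrun : valid_run R Kn m)
    (k : nat) (hk : (k < Ktot Kn)%N) (j : 'I_N) (hj : j != m k) :
  Qtilde R Kn m k.+1 j =
    (xcount m k j + 1)%:R / (Kn j)%:R - (xcount m k (m k))%:R / (Kn (m k))%:R.
Proof.
have HK : (Ktot Kn)%:R != 0 :> R by rewrite pnatr_eq0 -lt0n (leq_ltn_trans _ hk).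
have Hj : (Kn j)%:R != 0 :> R by rewrite pnatr_eq0 -lt0n.
have := @inv_lem R N Kn HKpos HK m k.+1 j.
have -> : xcount m k j = pc m k.+1 j by [].
have -> : xcount m k (m k) = pc m k.+1 (m k) by [].
rewrite /Qtilde /Qk /quantum.
set B := deficit R Kn m k.+1 j.
set c := cc R Kn m k.+1.
rewrite natrD => H; rewrite -H.
clearbody B; move: ((Ktot Kn)%:R : R) HK (((Kn j)%:R : R)) Hj => KK HKK KJ HKJ.
by field; apply/andP.
Qed.
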